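(* Let $\ell\ge 1$ be an integer and let $P$ be a set of $n_\ell$ points. There exists a set system $\mathcal{Q}\subseteq 2^P$ such that: (1) $\mathcal{Q}$ consists of exactly $\lceil n_{\ell-1}/2\rceil+1$ sets, each of size $n_{\ell-1}$; (2) for every $p\in P$ there is a set in $\mathcal{Q}$ not containing $p$; (3) for every $p\in P$ there is a $q\in P$ such that every set in $\mathcal{Q}$ contains at least one of $p$ and $q$.
   Context: The sequence $n_0,n_1,\ldots$ is defined by $n_0=1$ and, for $i>0$, $n_i=\left(\lceil n_{i-1}/2\rceil+1\right)\cdot\left(\lfloor n_{i-1}/2\rfloor+1\right)$. *)

(* Defs.v *)
From mathcomp Require Import all_boot.
Set Implicit Arguments. Unset Strict Implicit. Unset Printing Implicit Defensive.

(* n_0 = 1, n_i = (ceil(n_{i-1}/2) + 1) * (floor(n_{i-1}/2) + 1).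
   In ssrnat: uphalf m = ceil(m/2), m./2 = floor(m/2). *)
Fixpoint nseq_n (i : nat) : nat :=
  match i with
  | 0 => 1
  | i'.+1 => ((uphalf (nseq_n i')).+1 * ((nseq_n i')./2).+1)%N
  end.

(* Main.v *)
Require Import Defs.
From mathcomp Require Import all_boot.
From mathcomp Require Import zify.
Set Implicit Arguments. Unset Strict Implicit. Unset Printing Implicit Defensive.

Lemma bij_exists (X T : finType) (P : {set T}) :
  #|P| = #|X| -> exists f : X -> T, injective f /\ f @: setT = P.
Proof.
move=> E.
pose f (x : X) : T := enum_val (cast_ord (esym E) (enum_rank x)).
have fi : injective f.
  move=> x y /enum_val_inj /cast_ord_inj /enum_rank_inj //.
exists f; split=> //.
apply/eqP; rewrite eqEcard card_imset // cardsT E leqnn andbT.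
apply/subsetP=> _ /imsetP [x _ ->]; exact: enum_valP.
Qed.

Lemma main a b (T : finType) (P : {set T}) : 1 <= a ->
  #|P| = (a.+1 * b.+1)%N ->
  exists Q : {set {set T}},
    [/\ (forall S, S \in Q -> S \subset P),
        #|Q| = a.+1,
        (forall S, S \in Q -> #|S| = a + b),
        (forall p, p \in P -> exists2 S, S \in Q & p \notin S)
      & (forall p, p \in P -> exists2 q, q \in P &
           forall S, S \in Q -> (p \in S) || (q \in S))].
Proof.
move=> a1 HP.
have EP : #|P| = #|{: 'I_(a.+1) * 'I_(b.+1)}| by rewrite HP card_prod !card_ord.
have [f [fi fP]] := bij_exists EP.
pose A (j : 'I_(a.+1)) : {set ('I_(a.+1) * 'I_(b.+1))} :=
  [set x | if x.2 == ord0 then x.1 != j else x.1 == j].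
pose S j := f @: A j.
have SI : injective S.
  move=> j1 j2 E; case: (j1 =P j2) => // /eqP ne; exfalso.
  have : f (j2, ord0) \in S j1 by rewrite /S mem_imset // inE /= eq_sym.
  by rewrite E /S mem_imset // inE /= !eqxx.
have memS j x : (f x \in S j) = (if x.2 == ord0 then x.1 != j else x.1 == j).
  by rewrite /S mem_imset // inE.
exists (S @: setT); split.
- move=> _ /imsetP [j _ ->]; rewrite -fP; apply: imsetS; exact: subsetT.
- by rewrite card_imset // cardsT card_ord.
- move=> _ /imsetP [j _ ->]; rewrite card_imset //.
  have -> : A j = [set (i, ord0) | i in [set~ j]] :|: [set (j, k) | k in [set~ ord0]].
    apply/setP=> [[i k]]; rewrite !inE /=.
    case: eqP => [->|nk].
      apply/idP/idP.
      + by move=> h; apply/orP; left; apply/imsetP; exists i; rewrite ?inE.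
      + case/orP=> /imsetP [y] h [e]; first by rewrite e; rewrite !inE in h.
        by move=> ey; rewrite -ey !inE eqxx in h.
    apply/idP/idP.
    + move/eqP=> ->; apply/orP; right; apply/imsetP; exists k => //.
      by rewrite !inE; apply/eqP.
    + case/orP=> /imsetP [y]; rewrite inE => h [e1 e2].
        by rewrite e2 in nk.
      by rewrite e1.
  rewrite cardsU.
  have -> : [set (i, ord0 : 'I_(b.+1)) | i in [set~ j]] :&: [set (j, k) | k in [set~ (ord0 : 'I_(b.+1))]] = set0.
    apply/setP=> x; rewrite !inE; apply/negP=> /andP [/imsetP [y]].
    move=> h -> /imsetP [z] h2 [e1 e2]; by rewrite -e2 !inE eqxx in h2.
  rewrite cards0 subn0 !card_imset; last by move=> x y [].
    by rewrite !cardsC1 !card_ord.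
  by move=> x y [].
- move=> p; rewrite -fP => /imsetP [[i k] _ ->].
  case: (k =P ord0) => [ek|nk].
    exists (S i); first by apply/imsetP; exists i.
    by rewrite memS /= ek eqxx negbK.
  pose j : 'I_(a.+1) := if i == ord0 then ord_max else ord0.
  have nj : i != j.
    rewrite /j; case: (i =P ord0) => [ei|/eqP ni //].
    by rewrite ei; apply/eqP=> /(congr1 val) /=; lia.
  exists (S j); first by apply/imsetP; exists j.
  by rewrite memS /= (introF eqP nk).
- move=> p; rewrite -fP => /imsetP [[i k] _ ->].
  case: (k =P ord0) => [ek|nk].
    pose j : 'I_(a.+1) := if i == ord0 then ord_max else ord0.
    have nj : i != j.
      rewrite /j; case: (i =P ord0) => [ei|/eqP ni //].
      by rewrite ei; apply/eqP=> /(congr1 val) /=; lia.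
    exists (f (j, ord0)); first by apply/imsetP; eexists.
    move=> _ /imsetP [j' _ ->]; rewrite !memS /= ek ?eqxx.
    case: (i =P j') => [<-|]; last by [].
    by rewrite eq_sym nj.
  exists (f (i, ord0)); first by apply/imsetP; eexists.
  move=> _ /imsetP [j' _ ->]; rewrite !memS /= ?eqxx (introF eqP nk).
  by case: (i == j').
Qed.

Theorem lemma3 (l : nat) (T : finType) (P : {set T}) :
  1 <= l -> #|P| = nseq_n l ->
  exists Q : {set {set T}},
    [/\ (forall S, S \in Q -> S \subset P),
        #|Q| = (uphalf (nseq_n l.-1)).+1,
        (forall S, S \in Q -> #|S| = nseq_n l.-1),
        (forall p, p \in P -> exists2 S, S \in Q & p \notin S)
      & (forall p, p \in P -> exists2 q, q \in P &
           forall S, S \in Q -> (p \in S) || (q \in S))].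
Proof.
case: l => [//|l] _ /=.
have pos : 0 < nseq_n l by case: l.
have ab : uphalf (nseq_n l) + (nseq_n l)./2 = nseq_n l.
  rewrite uphalf_half -addnA addnn; exact: odd_double_half.
move=> HP.
have a1 : 1 <= uphalf (nseq_n l) by rewrite uphalf_gt0.
have [Q [h1 h2 h3 h4 h5]] := main a1 HP.
exists Q; split=> // S /h3; by rewrite ab.
Qed.
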